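(* Let $d\ge 1$, let $\Lambda$ be a $(d-2)$-dimensional simplicial complex with vertex set $[n]$, and let $\Gamma=0*\Lambda$ be the cone over $\Lambda$ with a new apex vertex $0$. Let $p':[n]\to\mathbb{R}^{d-1}$ be such that the coordinates $\{p'(s)_t:s\in[n],t\in[d-1]\}$ are algebraically independent over $\mathbb{Q}$, and set $\mathbb{F}'=\mathbb{Q}(p'(s)_t)$. Let $a_1,\dots,a_n\in\mathbb{R}$ be algebraically independent over $\mathbb{F}'$, and let $\mathbb{F}\subseteq\mathbb{R}$ be any field containing $\mathbb{F}'(a_1,\dots,a_n)$. Define $p:\{0,1,\dots,n\}\to\mathbb{F}^d$ by $p(0)=(0,\dots,0,-1)$ and $p(s)=((1+a_s)p'(s),a_s)$ for $s\in[n]$. Then for all $i\le\lfloor (d-1)/2\rfloor$ there exists an $\mathbb{F}'$-linear map $\psi_i:\mathcal{S}^a_i(\Lambda,p';\mathbb{F}')\to\mathcal{S}^a_i(\Gamma,p;\mathbb{F})$ such that for every $\omega'\in\mathcal{S}^a_i(\Lambda,p';\mathbb{F}')$, $\mathrm{supp}(\psi_i(\omega'))=\mathrm{skel}_{i-1}(0*\mathrm{supp}(\omega'))$.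
   Context: Simplicial complexes are nonempty families of subsets of a finite vertex set closed under subsets and containing all singletons; an $i$-face has $i+1$ elements. The cone $0*\Lambda=\{\sigma,\sigma\cup\{0\}:\sigma\in\Lambda\}$; $\mathrm{skel}_m(K)$ is the subcomplex of faces of dimension $\le m$. For a complex $K$ with vertex set $W$, a field $\mathbb{K}\subseteq\mathbb{R}$ and $r:W\to\mathbb{K}^e$ with $e-1=\dim K$, set $\theta_t=\sum_{v\in W}r(v)_tx_v$ for $t\in[e]$, and for a linear form $\ell=\sum_v\ell_vx_v$ let $\partial_\ell=\sum_v\ell_v\,\partial/\partial x_v$. A linear $i$-stress on $(K,r;\mathbb{K})$ is a homogeneous degree-$i$ polynomial $\lambda\in\mathbb{K}[x_v:v\in W]$ all of whose monomials with nonzero coefficient are supported on faces of $K$, with $\partial_{\theta_t}\lambda=0$ for all $t$; it is an affine $i$-stress if moreover $\partial_c\lambda=0$ where $c=\sum_{v\in W}x_v$. $\mathcal{S}^a_i(K,r;\mathbb{K})$ denotes the vector space of affine $i$-stresses. For a degree-$i$ stress $\lambda$ and an $(i-1)$-face $\sigma$, $\lambda_\sigma$ is the coefficient of $\prod_{v\in\sigma}x_v$, and $\mathrm{supp}(\lambda)$ is the subcomplex generated by the $(i-1)$-faces $\sigma$ with $\lambda_\sigma\ne0$. *)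

(* Defs.v *)
From HB Require Import structures.
From mathcomp Require Import all_boot all_order all_algebra.
From mathcomp Require Import reals.
From mathcomp Require Import mpoly.

Set Implicit Arguments.
Unset Strict Implicit.
Unset Printing Implicit Defensive.

Import Order.TTheory GRing.Theory Num.Theory.
Local Open Scope ring_scope.

Section Defs.
Variable R : realType.

Definition is_subfield (K : R -> Prop) : Prop :=
  [/\ K 1,
      (forall x y, K x -> K y -> K (x - y)),
      (forall x y, K x -> K y -> K (x * y)) &
      (forall x, K x -> K x^-1)].

Definition ratK : R -> Prop := fun x => exists q : rat, x = ratr q.

Definition genfield (S : R -> Prop) : R -> Prop :=
  fun x => forall K, is_subfield K -> (forall y, S y -> K y) -> K x.

Definition alg_indep_over (K : R -> Prop) (I : finType) (x : I -> R) : Prop :=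
  forall P : {mpoly R[#|I|]},
    (forall m, K P@_m) ->
    P.@[fun j => x (enum_val j)] = 0 -> P = 0.

Definition is_complex (m : nat) (K : {set {set 'I_m}}) : Prop :=
  [/\ K != set0,
      (forall s t : {set 'I_m}, s \in K -> t \subset s -> t \in K) &
      (forall v : 'I_m, [set v] \in K)].

(* The complex has dimension k - 1: faces have at most k elements and some
   face has exactly k elements. *)
Definition has_dim_card (m : nat) (K : {set {set 'I_m}}) (k : nat) : Prop :=
  (forall s, s \in K -> #|s| <= k)%N /\ (exists2 s, s \in K & #|s| = k).

(* Cone over a family of sets on 'I_n with apex ord0 (the vertex j of the
   base corresponds to the vertex lift ord0 j = j.+1 of the cone):
   0 * L = { s, s U {0} : s in L }. *)
Definition cone (n : nat) (L : {set {set 'I_n}}) : {set {set 'I_n.+1}} :=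
  [set t : {set 'I_n.+1} | (lift ord0 @^-1: t) \in L].

(* Faces of cardinality at most k, i.e. of dimension at most k - 1:
   skelc k K = skel_(k-1)(K). *)
Definition skelc (m : nat) (k : nat) (K : {set {set 'I_m}}) : {set {set 'I_m}} :=
  [set s in K | (#|s| <= k)%N].

Definition mnm_supp (m : nat) (mu : 'X_{1..m}) : {set 'I_m} :=
  [set v | (mu v != 0)%N].

Definition dlin (m : nat) (l : 'I_m -> R) (P : {mpoly R[m]}) : {mpoly R[m]} :=
  \sum_(v < m) l v *: mderiv v P.

Definition affine_stress (m e : nat) (K : {set {set 'I_m}})
    (r : 'I_m -> 'I_e -> R) (Kf : R -> Prop) (i : nat) (P : {mpoly R[m]}) : Prop :=
  [/\ (forall mu, Kf P@_mu),
      P \is i.-homog,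
      (forall mu, mu \in msupp P -> mnm_supp mu \in K),
      (forall t : 'I_e, dlin (fun v => r v t) P = 0) &
      dlin (fun _ => 1) P = 0].

Definition sqfree (m : nat) (s : {set 'I_m}) : 'X_{1..m} :=
  [multinom (nat_of_bool (j \in s)) | j < m].

Definition stress_supp (m : nat) (i : nat) (P : {mpoly R[m]}) : {set {set 'I_m}} :=
  [set t : {set 'I_m} | [exists s : {set 'I_m},
     [&& #|s| == i, P@_(sqfree s) != 0 & t \subset s]]].

(* the lifted configuration p : {0..n} -> R^d of the paper
   p(0) = (0,...,0,-1), p(s) = ((1 + a_s) p'(s), a_s) *)
Definition lift_config (n d : nat) (p' : 'I_n -> 'I_d.-1 -> R) (a : 'I_n -> R)
    : 'I_n.+1 -> 'I_d -> R :=
  fun v t =>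
    match unlift ord0 v with
    | None => if val t == d.-1 then -1 else 0
    | Some s =>
        match (insub (val t) : option 'I_d.-1) with
        | Some t' => (1 + a s) * p' s t'
        | None => a s
        end
    end.

End Defs.

(* Main.v *)
Require Import Defs.
From HB Require Import structures.
From mathcomp Require Import all_boot all_order all_algebra.
From mathcomp Require Import reals.
From mathcomp Require Import mpoly.
From mathcomp Require Import ring zify.
Import Order.TTheory GRing.Theory Num.Theory.
Local Open Scope ring_scope.

Module Aux.
Set Implicit Arguments.
Unset Strict Implicit.
Unset Printing Implicit Defensive.

Section Gen.
Variable R : comNzRingType.

Lemma mpoly_ind_ring n (P : {mpoly R[n]} -> Prop) :
  P 1 -> (forall i, P 'X_i) -> (forall p q, P p -> P q -> P (p + q)) ->
  (forall p q, P p -> P q -> P (p * q)) -> (forall c p, P p -> P (c *: p)) ->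
  forall p, P p.
Proof.
move=> P1 PX PD PM PZ p.
have P0 : P 0 by rewrite -(scale0r 1); apply: PZ.
rewrite [p]mpolyE; elim/big_ind: _ => // m _.
apply: PZ; rewrite mpolyXE_id; elim/big_ind: _ => // i _.
elim: (m i) => [|k IH]; first by rewrite expr0.
by rewrite exprS; apply: PM.
Qed.

Lemma mderiv1 n (u : 'I_n) : mderiv u (1 : {mpoly R[n]}) = 0.
Proof. by rewrite -mpolyC1 mderivC. Qed.

Lemma mderivXU n (u i : 'I_n) : mderiv u ('X_i : {mpoly R[n]}) = (i == u)%:R.
Proof.
rewrite mderivX mnm1E; case: eqP => [->|_]; last by rewrite scale0r.
have -> : (U_(u) - U_(u) = 0 :> 'X_{1..n})%MM by apply/mnmP=> j; rewrite mnmBE subnn mnm0E.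
  by rewrite mpolyX0 scale1r.
Qed.

Lemma mderiv_comp n k (lq : n.-tuple {mpoly R[k]}) (j : 'I_k) p :
  mderiv j (p \mPo lq) = \sum_(u < n) (mderiv u p \mPo lq) * mderiv j (tnth lq u).
Proof.
elim/mpoly_ind_ring: p.
- rewrite comp_mpoly1 mderiv1 big1 // => u _.
  by rewrite mderiv1 comp_mpoly0 mul0r.
- move=> i; rewrite comp_mpolyXU -tnth_nth (bigD1 i) //= big1 => [|u /negbTE ui].
    by rewrite mderivXU eqxx comp_mpoly1 mul1r addr0.
  by rewrite mderivXU eq_sym ui comp_mpoly0 mul0r.
- move=> p q Hp Hq; rewrite comp_mpolyD mderivD Hp Hq -big_split /=.
  by apply: eq_bigr => u _; rewrite mderivD comp_mpolyD mulrDl.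
- move=> p q Hp Hq; rewrite rmorphM /= mderivM Hp Hq mulr_suml mulr_sumr -big_split /=.
  apply: eq_bigr => u _; rewrite mderivM comp_mpolyD !rmorphM /= mulrDl.
  by congr (_ + _); rewrite -!mulrA; congr (_ * _); rewrite mulrC.
- move=> c p Hp; rewrite comp_mpolyZ mderivZ Hp scaler_sumr.
  by apply: eq_bigr => u _; rewrite mderivZ comp_mpolyZ scalerAl.
Qed.


Section Kc.
Variable K : R -> Prop.
Definition Kring := [/\ K 0, K 1, (forall x y, K x -> K y -> K (x + y)) &
  (forall x y, K x -> K y -> K (x * y))].
Hypothesis HK : Kring.
Let K0 : K 0. Proof. by case: HK. Qed.
Let K1 : K 1. Proof. by case: HK. Qed.
Let KD : forall x y, K x -> K y -> K (x + y). Proof. by case: HK. Qed.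
Let KM : forall x y, K x -> K y -> K (x * y). Proof. by case: HK. Qed.

Definition Kcoef n (q : {mpoly R[n]}) := forall M, K q@_M.

Lemma Kb (b : bool) : K b%:R.
Proof. by case: b. Qed.

Lemma Kcoef0 n : Kcoef (0 : {mpoly R[n]}).
Proof. by move=> M; rewrite mcoeff0. Qed.
Lemma Kcoef1 n : Kcoef (1 : {mpoly R[n]}).
Proof. by move=> M; rewrite mcoeff1; apply: Kb. Qed.
Lemma KcoefX n (m : 'X_{1..n}) : Kcoef 'X_[m].
Proof. by move=> M; rewrite mcoeffX; apply: Kb. Qed.
Lemma KcoefD n (p q : {mpoly R[n]}) : Kcoef p -> Kcoef q -> Kcoef (p + q).
Proof. by move=> Hp Hq M; rewrite mcoeffD; apply: KD. Qed.
Lemma KcoefM n (p q : {mpoly R[n]}) : Kcoef p -> Kcoef q -> Kcoef (p * q).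
Proof.
move=> Hp Hq M; rewrite mcoeffM; apply: big_ind; [exact: K0 | exact: KD | by move=> k _; apply: KM].
Qed.
Lemma KcoefZ n c (p : {mpoly R[n]}) : K c -> Kcoef p -> Kcoef (c *: p).
Proof. by move=> Hc Hp M; rewrite mcoeffZ; apply: KM. Qed.
Lemma Kcoef_sum n (I : Type) (r : seq I) (P : pred I) (F : I -> {mpoly R[n]}) :
  (forall i, P i -> Kcoef (F i)) -> Kcoef (\sum_(i <- r | P i) F i).
Proof. move=> H; apply: (big_ind (fun q : {mpoly R[n]} => Kcoef q)); [exact: Kcoef0 | exact: KcoefD | exact: H]. Qed.
Lemma Kcoef_prod n (I : Type) (r : seq I) (P : pred I) (F : I -> {mpoly R[n]}) :
  (forall i, P i -> Kcoef (F i)) -> Kcoef (\prod_(i <- r | P i) F i).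
Proof. move=> H; apply: (big_ind (fun q : {mpoly R[n]} => Kcoef q)); [exact: Kcoef1 | exact: KcoefM | exact: H]. Qed.
Lemma KcoefXn n (p : {mpoly R[n]}) k : Kcoef p -> Kcoef (p ^+ k).
Proof.
move=> Hp; elim: k => [|k IH]; first by rewrite expr0; apply: Kcoef1.
by rewrite exprS; apply: KcoefM.
Qed.
End Kc.


Section Shift.
Variable n : nat.

Definition gS : n.-tuple {mpoly R[n.+1]} :=
  [tuple ('X_(lift ord0 u) - 'X_ord0) | u < n].
Definition Sh (p : {mpoly R[n]}) : {mpoly R[n.+1]} := p \mPo gS.
Definition hZ : n.+1.-tuple {mpoly R[n]} :=
  [tuple (if unlift ord0 j is Some u then 'X_u else 0) | j < n.+1].
Definition mk0 (m : 'X_{1..n}) : 'X_{1..n.+1} :=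
  [multinom (if unlift ord0 j is Some u then m u else 0%N) | j < n.+1].
Definition unmk (M : 'X_{1..n.+1}) : 'X_{1..n} := [multinom M (lift ord0 u) | u < n].

Lemma sum_coefX k (q : {mpoly R[k]}) x :
  \sum_(M <- msupp q) q@_M * (M == x)%:R = q@_x.
Proof.
transitivity ((\sum_(m <- msupp q) q@_m *: 'X_[m])@_x); last by rewrite -mpolyE.
rewrite raddf_sum /=; apply: eq_bigr => M _.
by rewrite mcoeffZ mcoeffX.
Qed.

Lemma prod_hZ (M : 'X_{1..n.+1}) :
  \prod_(j < n.+1) (tnth hZ j) ^+ (M j) = (M ord0 == 0%N)%:R *: 'X_[unmk M].
Proof.
rewrite big_ord_recl tnth_mktuple unlift_none expr0n.
rewrite [X in _ = _ *: X]mpolyXE_id -mul_mpolyC; congr (_ * _).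
  by case: (_ == _); rewrite ?mpolyC1 ?mpolyC0.
by apply: eq_bigr => u _; rewrite tnth_mktuple liftK mnmE.
Qed.

Lemma mk0_eq (M : 'X_{1..n.+1}) m :
  ((M ord0 == 0%N) && (unmk M == m)) = (M == mk0 m).
Proof.
apply/andP/eqP => [[/eqP H0 /eqP <-]|->].
  apply/mnmP => j; rewrite mnmE; case: unliftP => [u ->|->] //.
  by rewrite mnmE.
split; first by rewrite mnmE unlift_none.
by apply/eqP/mnmP => u; rewrite mnmE mnmE liftK.
Qed.

Lemma Z_coef q m : (q \mPo hZ)@_m = q@_(mk0 m).
Proof.
rewrite comp_mpolyE raddf_sum /= -sum_coefX; apply: eq_bigr => M _.
rewrite mcoeffZ prod_hZ mcoeffZ mcoeffX -mk0_eq; congr (_ * _).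
by case: (_ == _); case: (_ == _); rewrite /= ?mul1r ?mul0r.
Qed.

Lemma ZS p : Sh p \mPo hZ = p.
Proof.
rewrite /Sh (comp_mpolyE p) raddf_sum /=.
transitivity (\sum_(m <- msupp p) p@_m *: 'X_[m]); last by rewrite -mpolyE.
apply: eq_bigr => m _.
rewrite comp_mpolyZ rmorph_prod /= mpolyXE_id; congr (_ *: _).
apply: eq_bigr => u _; rewrite rmorphXn /= tnth_mktuple rmorphB /= !comp_mpolyXU.
by rewrite -!tnth_nth !tnth_mktuple liftK unlift_none subr0.
Qed.

Lemma Sh_coef p m : (Sh p)@_(mk0 m) = p@_m.
Proof. by rewrite -Z_coef ZS. Qed.

Lemma Sh_deriv_lift p u : mderiv (lift ord0 u) (Sh p) = Sh (mderiv u p).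
Proof.
rewrite mderiv_comp (bigD1 u) //= big1 => [|v vu].
  by rewrite tnth_mktuple mderivB !mderivXU eqxx (negbTE (neq_lift _ _)) subr0 mulr1 addr0.
rewrite tnth_mktuple mderivB !mderivXU (negbTE (neq_lift _ _)) subr0.
by rewrite (inj_eq (@lift_inj _ _)) (negbTE vu) mulr0.
Qed.

Lemma Sh_deriv0 p : mderiv ord0 (Sh p) = - \sum_(u < n) Sh (mderiv u p).
Proof.
rewrite mderiv_comp -sumrN; apply: eq_bigr => u _.
rewrite tnth_mktuple mderivB !mderivXU eqxx eq_sym (negbTE (neq_lift _ _)).
by rewrite sub0r mulrN1.
Qed.

Lemma Sh_linear c p q : Sh (c *: p + q) = c *: Sh p + Sh q.
Proof. by rewrite /Sh comp_mpolyD comp_mpolyZ. Qed.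

Lemma homog_prod_gen k (s : seq 'I_n) (g : 'I_n -> {mpoly R[k]}) (m : 'I_n -> nat) :
  (forall u, g u \is 1.-homog) ->
  \prod_(u <- s) (g u) ^+ (m u) \is (\sum_(u <- s) m u)%N.-homog.
Proof.
move=> Hg; elim: s => [|u s IH]; first by rewrite !big_nil dhomog1.
rewrite !big_cons; apply: dhomogM => //.
have := dhomogMn (m u) (Hg u); rewrite mul1n; exact.
Qed.

Lemma Sh_homog p d : p \is d.-homog -> Sh p \is d.-homog.
Proof.
move=> /dhomogP Hp; rewrite /Sh comp_mpolyE.
rewrite big_seq; apply: rpred_sum => m Hm; apply: rpredZ.
have E : d = (\sum_i m i)%N by rewrite -(Hp m Hm); exact: mdegE.
rewrite E; apply: homog_prod_gen => u.
rewrite tnth_mktuple; apply: rpredB; rewrite dhomogX; apply/eqP; exact: mdeg1.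
Qed.

End Shift.


Section Tsupp.
Variable k : nat.
Variable T : pred 'I_k.
Definition Tsupp (q : {mpoly R[k]}) :=
  forall M, M \in msupp q -> forall j, M j != 0%N -> T j.

Lemma Tsupp1 : Tsupp 1.
Proof. move=> M; rewrite -mpolyC1 msupp1 inE => /eqP -> j; by rewrite mnm0E. Qed.

Lemma TsuppM p q : Tsupp p -> Tsupp q -> Tsupp (p * q).
Proof.
move=> Hp Hq M /msuppM_le /allpairsP [[m1 m2] /= [H1 H2 ->]] j.
rewrite mnmDE; case E1: (m1 j == 0%N).
  by rewrite (eqP E1) add0n; apply: Hq.
by move=> _; apply: (Hp m1) => //; rewrite E1.
Qed.

Lemma TsuppXn p e : Tsupp p -> Tsupp (p ^+ e).
Proof.
move=> Hp; elim: e => [|e IH]; first by rewrite expr0; apply: Tsupp1.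
by rewrite exprS; apply: TsuppM.
Qed.

Lemma Tsupp_prod (I : Type) (r : seq I) (F : I -> {mpoly R[k]}) :
  (forall i, Tsupp (F i)) -> Tsupp (\prod_(i <- r) F i).
Proof.
move=> H; elim: r => [|i r IH]; first by rewrite big_nil; apply: Tsupp1.
by rewrite big_cons; apply: TsuppM.
Qed.

Lemma TsuppXB (a b : 'I_k) : T a -> T b -> Tsupp ('X_a - 'X_b).
Proof.
move=> Ta Tb M /msuppB_le; rewrite mem_cat !msuppX !inE.
by case/orP => /eqP -> j; rewrite mnm1E; [case: (a =P j) => [<- //|_] /= | case: (b =P j) => [<- //|_] /=].
Qed.
End Tsupp.

Lemma Sh_supp n (p : {mpoly R[n]}) M : M \in msupp (Sh p) ->
  exists2 m, m \in msupp p & forall u, M (lift ord0 u) != 0%N -> m u != 0%N.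
Proof.
rewrite /Sh comp_mpolyE => /msupp_sum_le /flattenP [s /mapP [m Hm ->] HM].
rewrite mem_filter /= in Hm.
exists m => // u; move/msuppZ_le: HM => HM.
pose T := fun j : 'I_n.+1 => if unlift ord0 j is Some v then m v != 0%N else true.
have : Tsupp T (\prod_(i < n) tnth (gS n) i ^+ m i).
  apply: Tsupp_prod => v; case E: (m v == 0%N); first by rewrite (eqP E) expr0; apply: Tsupp1.
  apply: TsuppXn; rewrite tnth_mktuple; apply: TsuppXB; rewrite /T ?liftK ?unlift_none ?E //.
by move/(_ M HM (lift ord0 u)); rewrite /T liftK.
Qed.

End Gen.

Section Subfield.
Variable R : realType.
Variable K : R -> Prop.
Hypothesis HK : is_subfield K.

Lemma sf1 : K 1. Proof. by case: HK. Qed.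
Lemma sfB x y : K x -> K y -> K (x - y). Proof. by case: HK => _ H _ _; apply: H. Qed.
Lemma sfM x y : K x -> K y -> K (x * y). Proof. by case: HK => _ _ H _; apply: H. Qed.
Lemma sfV x : K x -> K x^-1. Proof. by case: HK => _ _ _ H; apply: H. Qed.
Lemma sf0 : K 0. Proof. by rewrite -(subrr 1); apply: sfB; apply: sf1. Qed.
Lemma sfN x : K x -> K (- x). Proof. by move=> Hx; rewrite -sub0r; apply: sfB => //; apply: sf0. Qed.
Lemma sfD x y : K x -> K y -> K (x + y).
Proof. by move=> Hx Hy; rewrite -[y]opprK; apply: sfB => //; apply: sfN. Qed.
Lemma sfMn x k : K x -> K (x *+ k).
Proof.
move=> Hx; elim: k => [|k IH]; first by rewrite mulr0n; apply: sf0.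
by rewrite mulrS; apply: sfD.
Qed.
Lemma sfnat k : K k%:R. Proof. by apply: sfMn; apply: sf1. Qed.
Lemma sfXn x k : K x -> K (x ^+ k).
Proof.
move=> Hx; elim: k => [|k IH]; first by rewrite expr0; apply: sf1.
by rewrite exprS; apply: sfM.
Qed.
Lemma sf_prod (I : Type) (r : seq I) (P : pred I) (F : I -> R) :
  (forall i, P i -> K (F i)) -> K (\prod_(i <- r | P i) F i).
Proof. by move=> H; apply: big_ind => //; [apply: sf1 | apply: sfM]. Qed.
Lemma sf_sum (I : Type) (r : seq I) (P : pred I) (F : I -> R) :
  (forall i, P i -> K (F i)) -> K (\sum_(i <- r | P i) F i).
Proof. by move=> H; apply: big_ind => //; [apply: sf0 | apply: sfD]. Qed.

Lemma Kring_sf : Kring K.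
Proof. split; [exact: sf0 | exact: sf1 | exact: sfD | exact: sfM]. Qed.

Lemma Kcoef_sf n (p : {mpoly R[n]}) : Kcoef K p -> forall M, K p@_M.
Proof. by []. Qed.
End Subfield.

Lemma genfield_sf (R : realType) (S : R -> Prop) : is_subfield (genfield S).
Proof.
split.
- by move=> K HK _; apply: sf1.
- by move=> x y Hx Hy K HK HS; apply: sfB => //; [apply: Hx | apply: Hy].
- by move=> x y Hx Hy K HK HS; apply: sfM => //; [apply: Hx | apply: Hy].
- by move=> x Hx K HK HS; apply: sfV => //; apply: Hx.
Qed.

Lemma ratK_sf (R : realType) : is_subfield (@ratK R).
Proof.
split.
- by exists 1; rewrite rmorph1.
- by move=> x y [q1 ->] [q2 ->]; exists (q1 - q2); rewrite rmorphB.
- by move=> x y [q1 ->] [q2 ->]; exists (q1 * q2); rewrite rmorphM.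
- by move=> x [q ->]; exists q^-1; rewrite fmorphV.
Qed.

Section Constr.
Variable R : realType.
Variable n : nat.
Variable a : 'I_n -> R.
Hypothesis Ha : forall u, 1 + a u != 0.

Definition bb u := (1 + a u)^-1.
Definition bm (m : 'X_{1..n}) := \prod_(u < n) bb u ^+ m u.
Definition nu (w : {mpoly R[n]}) : {mpoly R[n]} :=
  \sum_(m <- msupp w) (w@_m * bm m) *: 'X_[m].
Definition psi w := Sh (nu w).

Lemma nu_coef w k : (nu w)@_k = w@_k * bm k.
Proof.
rewrite raddf_sum /= -(sum_coefX w k) big_distrl /=; apply: eq_bigr => m _.
rewrite mcoeffZ mcoeffX; case: eqP => [->|_]; by rewrite ?mulr1 ?mulr0 ?mul0r.
Qed.

Lemma nu_lin c w1 w2 : nu (c *: w1 + w2) = c *: nu w1 + nu w2.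
Proof.
apply/mpolyP => k; rewrite mcoeffD mcoeffZ !nu_coef mcoeffD mcoeffZ.
by rewrite mulrDl mulrA.
Qed.

Lemma psi_lin c w1 w2 : psi (c *: w1 + w2) = c *: psi w1 + psi w2.
Proof. by rewrite /psi nu_lin Sh_linear. Qed.

Lemma bmD m1 m2 : bm (m1 + m2) = bm m1 * bm m2.
Proof.
by rewrite /bm -big_split /=; apply: eq_bigr => u _; rewrite mnmDE exprD.
Qed.

Lemma bmU u : bm U_(u) = bb u.
Proof.
rewrite /bm (bigD1 u) //= big1 => [|v vu]; first by rewrite mnm1E eqxx expr1 mulr1.
by rewrite mnm1E eq_sym (negbTE vu) expr0.
Qed.

Lemma bb_neq0 u : bb u != 0.
Proof. by rewrite /bb invr_eq0. Qed.

Lemma bm_neq0 m : bm m != 0.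
Proof. by rewrite /bm; apply/prodf_neq0 => u _; rewrite expf_neq0 // bb_neq0. Qed.

Lemma nu_deriv (c : 'I_n -> R) w m :
  (\sum_(u < n) c u *: mderiv u (nu w))@_m =
  bm m * (\sum_(u < n) (c u * bb u) *: mderiv u w)@_m.
Proof.
rewrite !raddf_sum /= mulr_sumr; apply: eq_bigr => u _.
rewrite !mcoeffZ !mcoeff_mderiv nu_coef bmD bmU.
move: (w@_(m + U_(u))) (bm m) (bb u) (c u) (m u).+1 => x y z t N.
rewrite !mulrnAr; congr (_ *+ _); ring.
Qed.

Lemma psi_dlin (l : 'I_n.+1 -> R) w :
  dlin l (psi w) = Sh (\sum_(u < n) (l (lift ord0 u) - l ord0) *: mderiv u (nu w)).
Proof.
rewrite /dlin big_ord_recl /psi Sh_deriv0.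
have -> : Sh (\sum_(u < n) (l (lift ord0 u) - l ord0) *: mderiv u (nu w)) =
    \sum_(u < n) (l (lift ord0 u) - l ord0) *: Sh (mderiv u (nu w)).
  by rewrite /Sh raddf_sum; apply: eq_bigr => u _; exact: comp_mpolyZ.
have -> : \sum_(i < n) l (lift ord0 i) *: mderiv (lift ord0 i) (Sh (nu w)) =
    \sum_(i < n) l (lift ord0 i) *: Sh (mderiv i (nu w)).
  by apply: eq_bigr => u _; rewrite Sh_deriv_lift.
rewrite scalerN scaler_sumr -sumrN -big_split /=; apply: eq_bigr => u _.
by rewrite scalerBl addrC.
Qed.

Lemma psi_dlin0 (l : 'I_n.+1 -> R) w :
  dlin (fun u => (l (lift ord0 u) - l ord0) * bb u) w = 0 ->
  dlin l (psi w) = 0.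
Proof.
move=> H; rewrite psi_dlin.
have -> : \sum_(u < n) (l (lift ord0 u) - l ord0) *: mderiv u (nu w) = 0.
  by apply/mpolyP => m; rewrite nu_deriv mcoeff0 -[X in X@_m]/(dlin _ w) H mcoeff0 mulr0.
by rewrite /Sh comp_mpoly0.
Qed.

End Constr.

Section IndA.
Variable R : realType.
Variable n : nat.
Variable a : 'I_n -> R.
Variable K : R -> Prop.
Hypothesis HK : is_subfield K.
Hypothesis Hind : alg_indep_over K a.

Let HR : Kring K := Kring_sf HK.

Lemma Kcoef_Xlin (j : 'I_#|'I_n|) : Kcoef K (1 + 'X_j : {mpoly R[#|'I_n|]}).
Proof. by apply: (KcoefD HR); [apply: (Kcoef1 HR) | apply: (KcoefX HR)]. Qed.

Lemma U_neq0 k (j : 'I_k) : (U_(j) != 0 :> 'X_{1..k})%MM.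
Proof. by apply/eqP => /mnmP /(_ j); rewrite mnm1E mnm0E eqxx. Qed.

Lemma one_plus_a_neq0 u : 1 + a u != 0.
Proof.
apply/eqP => H.
have := Hind (P := 1 + 'X_(enum_rank u)) (Kcoef_Xlin _).
rewrite rmorphD /= meval1 mevalXU enum_rankK => /(_ H) /(congr1 (mcoeff 0%MM)).
rewrite mcoeffD mcoeff1 mcoeffX (negbTE (U_neq0 _)) eqxx mcoeff0 addr0.
by move/eqP; rewrite oner_eq0.
Qed.

Lemma indep_b (c : 'I_n -> R) : (forall u, K (c u)) ->
  \sum_(u < n) c u * (1 + a u)^-1 = 0 -> forall u, c u = 0.
Proof.
move=> Kc Hs u0.
pose Q : {mpoly R[#|'I_n|]} :=
  \sum_(u < n) c u *: \prod_(v < n | v != u) (1 + 'X_(enum_rank v)).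
have KQ : Kcoef K Q.
  apply: (Kcoef_sum HR) => u _; apply: (KcoefZ HR) => //; apply: (Kcoef_prod HR) => v _.
  exact: Kcoef_Xlin.
have evQ : forall z : 'I_#|'I_n| -> R, Q.@[z] =
    \sum_(u < n) c u * \prod_(v < n | v != u) (1 + z (enum_rank v)).
  move=> z; rewrite /Q rmorph_sum /=; apply: eq_bigr => u _.
  rewrite mevalZ rmorph_prod /=; congr (_ * _); apply: eq_bigr => v _.
  by rewrite rmorphD /= meval1 mevalXU.
have Q0 : Q = 0.
  apply: Hind => //; rewrite evQ.
  have : (\sum_(u < n) c u * (1 + a u)^-1) * \prod_(v < n) (1 + a v) = 0 by rewrite Hs mul0r.
  rewrite big_distrl /= => H; rewrite -[RHS]H; apply: eq_bigr => u _.
  rewrite [in RHS](bigD1 u) //= mulrA -(mulrA (c u)) mulVf ?one_plus_a_neq0 // mulr1.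
  congr (_ * _).
  by apply: eq_bigr => v _; rewrite enum_rankK.
pose z := fun j : 'I_#|'I_n| => if enum_val j == u0 then -1 else 0 : R.
have E1 : forall u, u != u0 -> \prod_(v < n | v != u) (1 + z (enum_rank v)) = 0.
  move=> u uu0; rewrite (bigD1 u0) 1?eq_sym //= /z /= enum_rankK eqxx addrN mul0r //.
have E2 : \prod_(v < n | v != u0) (1 + z (enum_rank v)) = 1.
  by apply: big1 => v vu0; rewrite /z /= enum_rankK (negbTE vu0) addr0.
have := evQ z; rewrite Q0 meval0 (bigD1 u0) //= E2 mulr1 big1 ?addr0 => [/esym //|u uu0].
by rewrite E1 ?mulr0.
Qed.
End IndA.

Section Lee.
Variable R : realType.
Variables n d : nat.
Variable p' : 'I_n -> 'I_d.-1 -> R.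
Hypothesis Hind : alg_indep_over (@ratK R) (fun st : 'I_n * 'I_d.-1 => p' st.1 st.2).
Variable s : {set 'I_n}.
Hypothesis Hs : (#|s| <= d)%N.

Local Notation k := #|s|.
Definition ee (j : 'I_k) : 'I_n := enum_val j.

Definition ent (S : nzRingType) (f : 'I_n -> 'I_d.-1 -> S) (j l : 'I_k) : S :=
  if (l == 0 :> nat) then 1 else
  match (insub (l.-1) : option 'I_d.-1) with Some t => f (ee j) t | None => 0 end.

Definition vr (u : 'I_n) (t : 'I_d.-1) := enum_rank (u, t).

Definition Amx : 'M[{mpoly R[#|{: 'I_n * 'I_d.-1}|]}]_k :=
  \matrix_(j, l) ent (fun u t => 'X_(vr u t)) j l.

Lemma evalA v : (\det Amx).@[v] = \det (\matrix_(j, l) ent (fun u t => v (vr u t)) j l).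
Proof.
rewrite -det_map_mx; congr (\det _); apply/matrixP => j l; rewrite !mxE /ent.
case: ifP => _; first exact: rmorph1.
by case: insub => [t|]; [exact: mevalXU | exact: rmorph0].
Qed.

Lemma ratK_coef_det : Kcoef (@ratK R) (\det Amx).
Proof.
have HK := ratK_sf R; have HR := Kring_sf HK.
rewrite /determinant; apply: (Kcoef_sum HR) => sg _; apply: (KcoefM HR).
  apply: (KcoefXn HR) => M; rewrite mcoeffN mcoeff1; apply: sfN => //; exact: sfnat.
apply: (Kcoef_prod HR) => i _; rewrite mxE /ent.
case: ifP => _; first exact: (Kcoef1 HR).
by case: insub => [t|]; [apply: (KcoefX HR) | apply: (Kcoef0 HR)].
Qed.

Lemma ee_index (j : 'I_k) : index (ee j) (enum s) = j.
Proof.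
rewrite /ee (enum_val_nth (ee j)) index_uniq ?enum_uniq //.
by rewrite -cardE.
Qed.

Lemma detA_neq0 : \det Amx != 0.
Proof.
apply/eqP => H.
pose z := fun x : 'I_#|{: 'I_n * 'I_d.-1}| =>
  ((val (enum_val x).2).+1 == index (enum_val x).1 (enum s))%:R : R.
have := evalA z; rewrite H meval0.
have -> : \matrix_(j, l) ent (fun u t => z (vr u t)) j l =
          \matrix_(j, l) (if (l == 0 :> nat) then 1 else (l == j :> nat)%:R) :> 'M[R]_k.
  apply/matrixP => j l; rewrite !mxE /ent; case: ifP => // l0.
  case: insubP => [t _ tv|H1].
    by rewrite /z /vr /= enum_rankK /= ee_index tv prednK // lt0n l0.
  suff: (l : nat) != j by move/negbTE => ->.
  apply: contraNneq H1 => _.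
  have ld : (l < d)%N := leq_trans (ltn_ord l) Hs.
  move/negbT: l0; move: ld; clear; lia.
rewrite det_trig.
  rewrite big1 => [|i _]; first by move/esym/eqP; rewrite oner_eq0.
  by rewrite mxE eqxx; case: ifP.
apply/forallP => i; apply/forallP => j; apply/implyP => ij; rewrite mxE.
have j0 : (j == 0 :> nat) = false by apply/negbTE; rewrite -lt0n (leq_ltn_trans _ ij).
by rewrite j0 (gtn_eqF ij).
Qed.

Lemma lin_indep (c : 'I_n -> R) : (forall u, u \notin s -> c u = 0) ->
  \sum_(u < n) c u = 0 -> (forall t, \sum_(u < n) c u * p' u t = 0) ->
  forall u, c u = 0.
Proof.
move=> cout c1 cp.
pose v0 := fun x : 'I_#|{: 'I_n * 'I_d.-1}| => p' (enum_val x).1 (enum_val x).2.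
pose B := \matrix_(j, l) ent (fun u t => v0 (vr u t)) j l.
have detB : \det B != 0.
  apply/eqP => HB; move/eqP: detA_neq0; apply.
  apply: Hind; first exact: ratK_coef_det.
  by rewrite -HB evalA.
pose cr : 'rV[R]_k := \row_j c (ee j).
have sum_s : forall f : 'I_n -> R, \sum_(u < n) c u * f u = \sum_(j < k) cr 0 j * f (ee j).
  move=> f; rewrite (bigID (mem s)) /= [X in _ + X]big1 ?addr0 => [|u /cout ->]; last by rewrite mul0r.
  by rewrite big_enum_val; apply: eq_bigr => j _; rewrite mxE.
have crB : cr *m B = 0.
  have BE : forall j l, B j l = ent (fun u t => v0 (vr u t)) j l by move=> j l; rewrite mxE.
  apply/rowP => l; rewrite !mxE.
  under eq_bigr => j _ do rewrite BE /ent.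
  case: (boolP (l == 0 :> nat)) => l0.
    have E := sum_s (fun _ => 1); simpl in E; rewrite -E.
    by under eq_bigr => u _ do rewrite mulr1.
  case: insub => [t|]; last by rewrite big1 // => j _; rewrite mulr0.
  have E := sum_s (fun u => p' u t); simpl in E.
  rewrite (eq_bigr (fun j => cr 0 j * p' (ee j) t)) => [|j _]; last first.
    by rewrite /v0 /vr enum_rankK.
  by rewrite -E cp.
have cr0 : cr = 0.
  have Bu : B \in unitmx by rewrite unitmxE unitfE.
  by rewrite -(mulmxK Bu cr) crB mul0mx.
move=> u; case: (boolP (u \in s)) => us; last exact: cout.
have := congr1 (fun r : 'rV[R]_k => r 0 (enum_rank_in us u)) cr0.
by rewrite /= !mxE /ee enum_rankK_in.
Qed.
End Lee.

Lemma dlin_ext (R : realType) k (l1 l2 : 'I_k -> R) P :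
  (forall v, l1 v = l2 v) -> dlin l1 P = dlin l2 P.
Proof. by move=> H; apply: eq_bigr => v _; rewrite H. Qed.

Section Main.
Variable R : realType.
Variables d n : nat.
Variable Lam : {set {set 'I_n}}.
Variable p' : 'I_n -> 'I_d.-1 -> R.
Variable a : 'I_n -> R.
Variables F F' : R -> Prop.
Hypothesis Hd : (1 <= d)%N.
Hypothesis HLam : is_complex Lam.
Hypothesis Hp : alg_indep_over (@ratK R) (fun st : 'I_n * 'I_d.-1 => p' st.1 st.2).
Hypothesis HF' : is_subfield F'.
Hypothesis Ha : alg_indep_over F' a.
Hypothesis HF : is_subfield F.
Hypothesis HF'F : forall x, F' x -> F x.
Hypothesis HFa : forall s, F (a s).

Let Ha0 := one_plus_a_neq0 HF' Ha.

Lemma Fbb u : F (bb a u).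
Proof. by apply: sfV => //; apply: sfD => //; apply: sf1. Qed.

Lemma Fbm m : F (bm a m).
Proof. by apply: sf_prod => // u _; apply: sfXn => //; apply: Fbb. Qed.

Lemma msupp_nu w m : m \in msupp (nu a w) -> m \in msupp w.
Proof.
by rewrite !mcoeff_msupp nu_coef; apply: contraNneq => ->; rewrite mul0r.
Qed.

Lemma psi_stress i w : affine_stress Lam p' F' i w ->
  affine_stress (cone Lam) (lift_config p' a) F i (psi a w).
Proof.
case=> Hcoef Hhom Hsupp Hder Haff.
have HR := Kring_sf HF.
split.
- rewrite /psi /Sh comp_mpolyE; apply: (Kcoef_sum HR) => m _.
  apply: (KcoefZ HR).
    by rewrite nu_coef; apply: sfM => //; [apply: HF'F | apply: Fbm].
  apply: (Kcoef_prod HR) => u _; apply: (KcoefXn HR).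
  rewrite tnth_mktuple => M; rewrite mcoeffB !mcoeffX.
  by apply: sfB => //; apply: sfnat.
- apply: Sh_homog; apply/dhomogP => m /msupp_nu Hm.
  exact: (dhomogP _ _ _ Hhom).
- move=> M /Sh_supp [m /msupp_nu Hm HM].
  rewrite /cone inE; case: HLam => _ Hsub _.
  apply: (Hsub _ _ (Hsupp m Hm)); apply/subsetP => u; rewrite !inE; exact: HM.
- move=> t; apply: psi_dlin0.
  rewrite /lift_config unlift_none.
  case: insubP => [t' Ht Htv | Hn].
    have -> : (val t == d.-1) = false by apply/negbTE; rewrite neq_ltn Ht.
    rewrite -(Hder t'); apply: dlin_ext => u.
    by rewrite liftK subr0 mulrAC /bb mulfV ?Ha0 // mul1r.
  have Ht : (val t < d)%N := ltn_ord t.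
  have -> : (val t == d.-1) by move: Ht Hn; move: (val t) => x; lia.
  rewrite -Haff; apply: dlin_ext => u.
  by rewrite liftK opprK addrC /bb mulfV ?Ha0.
- apply: psi_dlin0; rewrite -[RHS](_ : dlin (fun _ => 0) w = 0).
    by apply: dlin_ext => u; rewrite subrr mul0r.
  by apply: big1 => u _; rewrite scale0r.
Qed.


Lemma sqfree_no0 (S : {set 'I_n.+1}) : ord0 \notin S ->
  sqfree S = mk0 (sqfree (lift ord0 @^-1: S)).
Proof.
move=> S0; apply/mnmP => j; rewrite !mnmE; case: unliftP => [u ->|->].
  by rewrite mnmE inE.
by rewrite (negbTE S0).
Qed.

Lemma sqfree_0 (S' : {set 'I_n}) :
  sqfree (ord0 |: (lift ord0 @: S')) = (mk0 (sqfree S') + U_(ord0))%MM.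
Proof.
apply/mnmP => j; rewrite mnmDE !mnmE ?mnm1E; case: unliftP => [u ->|->].
  rewrite in_setU1 eq_sym (negbTE (neq_lift _ _)) /= (mem_imset _ _ (@lift_inj _ ord0)).
  by rewrite mnmE addn0.
by rewrite setU11.
Qed.

Lemma sqfreeU1 (S' : {set 'I_n}) u : u \notin S' ->
  sqfree (u |: S') = (sqfree S' + U_(u))%MM.
Proof.
move=> uS; apply/mnmP => j; rewrite mnmDE !mnmE ?mnm1E in_setU1.
case: (eqVneq j u) => [->|ju]; first by rewrite (negbTE uS).
by rewrite /= addn0.
Qed.

Lemma psi_coef_no0 w (S : {set 'I_n.+1}) : ord0 \notin S ->
  (psi a w)@_(sqfree S) =
  w@_(sqfree (lift ord0 @^-1: S)) * bm a (sqfree (lift ord0 @^-1: S)).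
Proof. by move=> S0; rewrite sqfree_no0 // /psi Sh_coef nu_coef. Qed.

Lemma psi_coef_0 w (S' : {set 'I_n}) :
  (psi a w)@_(sqfree (ord0 |: (lift ord0 @: S'))) =
  - (bm a (sqfree S') *
     \sum_(u < n) (w@_(sqfree S' + U_(u)) *+ (sqfree S' u).+1) * bb a u).
Proof.
rewrite sqfree_0.
have := mcoeff_mderiv ord0 (psi a w) (mk0 (sqfree S')).
rewrite mnmE unlift_none mulr1n => <-.
rewrite /psi Sh_deriv0 mcoeffN raddf_sum /=; congr (- _).
rewrite mulr_sumr; apply: eq_bigr => u _.
rewrite Sh_coef mcoeff_mderiv nu_coef bmD bmU.
move: (w@_(sqfree S' + U_(u))) (bm a (sqfree S')) (bb a u) (sqfree S' u).+1 => x y z N.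
rewrite mulrnAl mulrnAr; congr (_ *+ _); ring.
Qed.

Lemma lee i w (S' : {set 'I_n}) : affine_stress Lam p' F' i w -> (#|S'| <= d)%N ->
  (forall u, u \notin S' -> w@_(sqfree S' + U_(u)) = 0) ->
  forall u, w@_(sqfree S' + U_(u)) = 0.
Proof.
case=> _ _ _ Hder Haff HS Hu.
have termeq : forall u, w@_(sqfree S' + U_(u)) *+ (sqfree S' u).+1 =
    w@_(sqfree S' + U_(u)) *+ 2.
  move=> u; rewrite mnmE; case: (boolP (u \in S')) => uS //.
  by rewrite Hu // !mul0rn.
apply: (lin_indep Hp HS) => [u /Hu //||t].
  have := congr1 (mcoeff (sqfree S')) Haff.
  rewrite /dlin raddf_sum mcoeff0 /=.
  under eq_bigr => u _ do rewrite mcoeffZ mul1r mcoeff_mderiv termeq.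
  by rewrite sumrMnl => /eqP; rewrite mulrn_eq0 /= => /eqP.
have := congr1 (mcoeff (sqfree S')) (Hder t).
rewrite /dlin raddf_sum mcoeff0 /=.
under eq_bigr => u _ do rewrite mcoeffZ mcoeff_mderiv termeq mulrnAr [p' u t * _]mulrC.
by rewrite sumrMnl => /eqP; rewrite mulrn_eq0 /= => /eqP.
Qed.


Lemma ord0_notin_im (s : {set 'I_n}) : ord0 \notin lift ord0 @: s.
Proof.
by apply/imsetP => [[u _ E]]; move: (neq_lift ord0 u); rewrite -E eqxx.
Qed.

Lemma preim_im (s : {set 'I_n}) : lift ord0 @^-1: (lift ord0 @: s) = s.
Proof. by apply/setP => u; rewrite inE (mem_imset _ _ (@lift_inj _ ord0)). Qed.

Lemma S_no0 (S : {set 'I_n.+1}) : ord0 \notin S -> S = lift ord0 @: (lift ord0 @^-1: S).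
Proof.
move=> S0; apply/setP => j; case: (unliftP ord0 j) => [u ->|->].
  by rewrite (mem_imset _ _ (@lift_inj _ ord0)) inE.
by rewrite (negbTE S0) (negbTE (ord0_notin_im _)).
Qed.

Lemma S_0 (S : {set 'I_n.+1}) : ord0 \in S -> S = ord0 |: lift ord0 @: (lift ord0 @^-1: S).
Proof.
move=> S0; apply/setP => j; rewrite in_setU1; case: (unliftP ord0 j) => [u ->|->].
  by rewrite eq_sym (negbTE (neq_lift _ _)) (mem_imset _ _ (@lift_inj _ ord0)) inE.
by rewrite S0 eqxx.
Qed.

Lemma card_im (s : {set 'I_n}) : #|lift ord0 @: s| = #|s|.
Proof. by rewrite card_imset //; apply: lift_inj. Qed.

Lemma card_0im (s : {set 'I_n}) : #|ord0 |: lift ord0 @: s| = #|s|.+1.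
Proof. by rewrite cardsU1 ord0_notin_im card_im. Qed.

Lemma psi_supp i w : (i <= d.-1./2)%N -> affine_stress Lam p' F' i w ->
  stress_supp i (psi a w) = skelc i (cone (stress_supp i w)).
Proof.
move=> Hi Hw; have Hid : (i <= d)%N by lia.
have Hw' := Hw; case: Hw' => Hcoef _ _ _ _.
apply/setP => t; rewrite /stress_supp /skelc /cone !inE.
apply/idP/idP.
- case/existsP => S /and3P [/eqP cS nz tS].
  have -> : (#|t| <= i)%N by rewrite -cS subset_leq_card.
  rewrite andbT; apply/existsP.
  case: (boolP (ord0 \in S)) => S0.
  + set S' := lift ord0 @^-1: S.
    have ES := S_0 S0; rewrite -/S' in ES.
    have cS' : #|S'|.+1 = i by rewrite -cS ES card_0im.
    move: nz; rewrite ES psi_coef_0 oppr_eq0 mulf_eq0 negb_or (negbTE (bm_neq0 Ha0 _)) /= => nz.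
    have [u uS wu] : exists2 u, u \notin S' & w@_(sqfree S' + U_(u)) != 0.
      case: (pickP (fun u => (u \notin S') && (w@_(sqfree S' + U_(u)) != 0))) => [u /andP [] | none].
        by exists u.
      have H0 := lee Hw (leq_trans (leqnSn _) (leq_trans (eq_leq cS') Hid)).
      move: nz; rewrite big1 ?eqxx // => u _.
      rewrite H0 ?mul0rn ?mul0r // => v vS; apply/eqP; move: (none v); rewrite vS /=.
      by move/negbT; rewrite negbK.
    exists (u |: S'); rewrite cardsU1 uS add1n cS' eqxx sqfreeU1 // wu /=.
    apply/subsetP => v; rewrite inE => vt; rewrite in_setU1; apply/orP; right.
    by rewrite inE; apply: (subsetP tS).
  + exists (lift ord0 @^-1: S).
    have ES := S_no0 S0.
    rewrite -cS {2}ES card_im eqxx /=.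
    move: nz; rewrite psi_coef_no0 // mulf_eq0 negb_or => /andP [-> _] /=.
    apply/subsetP => v; rewrite !inE; apply: (subsetP tS).
- case/andP => /existsP [s /and3P [/eqP cs nz ts]] ti.
  apply/existsP.
  case: (boolP (ord0 \in t)) => t0.
  + have lt_ts : (#|lift ord0 @^-1: t| < #|s|)%N.
      rewrite cs; apply: leq_trans ti; rewrite {2}(S_0 t0) card_0im //.
    have [u us ut] : exists2 u, u \in s & u \notin lift ord0 @^-1: t.
      apply/subsetPn; apply: contraTN lt_ts => H; rewrite -leqNgt; exact: subset_leq_card.
    set S' := s :\ u.
    have Es : s = u |: S' by rewrite setD1K.
    have uS' : u \notin S' by rewrite !inE eqxx.
    have cS' : #|S'|.+1 = i by rewrite -cs Es cardsU1 uS' add1n.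
    exists (ord0 |: lift ord0 @: S'); rewrite card_0im cS' eqxx /=.
    apply/andP; split.
      rewrite psi_coef_0 oppr_eq0 mulf_eq0 negb_or (bm_neq0 Ha0) /=.
      apply/eqP => Hsum.
      have Kc : forall v, F' (w@_(sqfree S' + U_(v)) *+ (sqfree S' v).+1).
        by move=> v; apply: sfMn.
      have := indep_b HF' Ha Kc Hsum u.
      rewrite mnmE (negbTE uS') mulr1n -sqfreeU1 // -Es => H.
      by move/eqP: nz.
    apply/subsetP => j jt; rewrite in_setU1; case: (unliftP ord0 j) => [v Ej|Ej]; last by rewrite Ej eqxx.
    rewrite Ej eq_sym (negbTE (neq_lift _ _)) /= (mem_imset _ _ (@lift_inj _ ord0)).
    rewrite !inE; apply/andP; split.
      by apply: contraNneq ut => <-; rewrite inE -Ej.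
    by apply: (subsetP ts); rewrite inE -Ej.
  + exists (lift ord0 @: s); rewrite card_im cs eqxx /=.
    rewrite psi_coef_no0 ?ord0_notin_im // preim_im mulf_neq0 ?(bm_neq0 Ha0) //=.
    rewrite (S_no0 t0); apply: imsetS; exact: ts.
Qed.

End Main.

End Aux.
Import Aux.
Unset Implicit Arguments.
Set Strict Implicit.

Theorem lemma3p2 (R : realType) (d n : nat) (Lam : {set {set 'I_n}})
    (p' : 'I_n -> 'I_d.-1 -> R) (a : 'I_n -> R) (F : R -> Prop) :
  (1 <= d)%N ->
  is_complex Lam -> has_dim_card Lam d.-1 ->
  alg_indep_over (@ratK R) (fun st : 'I_n * 'I_d.-1 => p' st.1 st.2) ->
  let F' := genfield (fun y => exists s t, y = p' s t) in
  alg_indep_over F' a ->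
  is_subfield F -> (forall x, F' x -> F x) -> (forall s, F (a s)) ->
  forall i : nat, (i <= d.-1./2)%N ->
  exists psi : {mpoly R[n]} -> {mpoly R[n.+1]},
    [/\ (forall w, affine_stress Lam p' F' i w ->
           affine_stress (cone Lam) (lift_config p' a) F i (psi w)),
        (forall c w1 w2, F' c ->
           affine_stress Lam p' F' i w1 -> affine_stress Lam p' F' i w2 ->
           psi (c *: w1 + w2) = c *: psi w1 + psi w2) &
        (forall w, affine_stress Lam p' F' i w ->
           stress_supp i (psi w) = skelc i (cone (stress_supp i w)))].
Proof.
move=> Hd HLam _ Hp F' Ha HF HF'F HFa i Hi.
have HF' : is_subfield F' := genfield_sf _.
exists (psi a); split.
- by move=> w; apply: psi_stress.
- by move=> c w1 w2 _ _ _; apply: psi_lin.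
- by move=> w; apply: psi_supp.
Qed.
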